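(* Let $k\geq 2$ and let $G$ and $G'$ be the graphs defined below. Then $Z(G)\leq 4k-2$ and $Z(G')\leq 4k-3$.
   Context: Let $k\geq 2$. Let $H$ be the graph with vertex set $\{0,1,\ldots,3k-2\}$ in which vertex $i$ is adjacent to $k+i,k+i+1,\ldots,2k+i-1$ (indices mod $3k-1$). Let $A$ be a clique with vertices $a_0,\ldots,a_k$, $B$ a coclique (independent set) with vertices $b_0,\ldots,b_k$, and $C$ a coclique with vertices $c_1,\ldots,c_{k-1}$. The graph $G$ is the disjoint union of $H,A,B,C$ together with the following edges: (i) $a_i\sim b_j$ for all $0\leq i,j\leq k$ with $i\neq j$; (ii) $c_i\sim j$ for all $1\leq i\leq k-1$ and $j\in\{0,k,k+1,\ldots,3k-2\}$; (iii) $b_i\sim j$ for all $0\leq i\leq k-1$ and $j\in\{1,\ldots,k-1\}$, and $b_k\sim j$ for all $j\in\{2k,\ldots,3k-2\}$; (iv) $b_i\sim k+i-1$ for $1\leq i\leq k$, and $b_0\sim 0$. ($G$ is $2k$-regular of order $6k$.) Let $X=V(A)\cup V(H)$. The graph $G'$ is obtained from $G$ by Godsil–McKay switching with respect to $X$: for every vertex $y\in V(B)\cup V(C)$ (each such $y$ has exactly $|X|/2$ neighbors in $X$), delete all edges between $y$ and $X$ and join $y$ instead to the $|X|/2$ vertices of $X$ that were not adjacent to $y$ in $G$; all other edges are unchanged. The zero forcing number $Z(\cdot)$ is the minimum size of a set $S$ of vertices such that, if the vertices of $S$ are colored blue and all others white, repeated application of the rule ''a blue vertex with exactly one white neighbor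 forces that neighbor to become blue'' eventually makes every vertex blue. *)

(* Defs.v *)
From mathcomp Require Import all_boot.
Set Implicit Arguments. Unset Strict Implicit. Unset Printing Implicit Defensive.

Definition force_step (T : finType) (e : rel T) (S : {set T}) : {set T} :=
  S :|: [set w | [exists v in S,
           [&& e v w, w \notin S & [forall u, (e v u && (u \notin S)) ==> (u == w)]]]].

(* The final blue set obtained from S (the process stabilises after #|T| rounds). *)
Definition force_closure (T : finType) (e : rel T) (S : {set T}) : {set T} :=
  iter #|T| (force_step e) S.

Definition zero_forcing_set (T : finType) (e : rel T) (S : {set T}) : bool :=
  force_closure e S == [set: T].

(* Z(e): minimum size of a zero forcing set (the whole vertex set is one). *)
Definition zero_forcing_number (T : finType) (e : rel T) : nat :=
  \big[minn/#|T|]_(S : {set T} | zero_forcing_set e S) #|S|.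

Definition gm_switch (T : finType) (e : rel T) (X : {set T}) : rel T :=
  fun u v => if (u \in X) != (v \in X) then ~~ e u v else e u v.

(* Vertices:  inl i            = vertex i of H, 0 <= i <= 3k-2
              inr (inl i)      = a_i, 0 <= i <= k
              inr (inr (inl i))= b_i, 0 <= i <= k
              inr (inr (inr i))= c_(i+1), 0 <= i <= k-2  *)
Definition vert (k : nat) : finType :=
  ('I_(3 * k - 1) + ('I_k.+1 + ('I_k.+1 + 'I_(k - 1))))%type.

Definition arcG (k : nat) (x y : vert k) : bool :=
  match x, y with
  | inl i, inl j =>                       (* H: i ~ k+i, ..., 2k+i-1 mod 3k-1 *)
      let n := 3 * k - 1 in
      let d := (j + n - i) %% n in (k <= d) && (d <= 2 * k - 1)
  | inr (inl i), inr (inl j) => i != j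
  | inr (inl i), inr (inr (inl j)) => nat_of_ord i != nat_of_ord j
  | inl j, inr (inr (inr _)) => (nat_of_ord j == 0) || (k <= j)
  | inl j, inr (inr (inl b)) =>
      [|| (b <= k - 1) && (1 <= j <= k - 1),
          (nat_of_ord b == k) && (2 * k <= j <= 3 * k - 2),
          (1 <= b <= k) && (nat_of_ord j == k + b - 1)
        | (nat_of_ord b == 0) && (nat_of_ord j == 0)]
  | _, _ => false
  end.

Definition adjG (k : nat) : rel (vert k) := fun x y => arcG x y || arcG y x.
Arguments adjG k : clear implicits.

Arguments arcG : clear implicits.
Definition XG (k : nat) : {set vert k} :=
  [set x : vert k | match x with inl _ => true | inr (inl _) => true | _ => false end].

Definition adjG' (k : nat) : rel (vert k) := gm_switch (adjG k) (@XG k).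
Arguments adjG' k : clear implicits.

(* Main.v *)
Require Import Defs.
From mathcomp Require Import all_boot.
From mathcomp Require Import zify.

Section Gen.
Variables (T : finType) (e : rel T).

Lemma fs_ext (S : {set T}) x : x \in S -> x \in force_step e S.
Proof. by move=> xS; rewrite /force_step inE xS. Qed.

Lemma fs_force (S : {set T}) v w : v \in S -> e v w ->
  (forall u, e v u -> u \notin S -> u = w) -> w \in force_step e S.
Proof.
move=> vS evw H; rewrite /force_step inE.
case wS: (w \in S) => //=; rewrite inE.
apply/existsP; exists v; rewrite vS evw wS /=.
apply/forallP => u; apply/implyP => /andP [evu uS].
by rewrite (H u evu uS).
Qed.

Lemma iter_mono (S : {set T}) m n x : m <= n ->
  x \in iter m (force_step e) S -> x \in iter n (force_step e) S.
Proof.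
move=> /subnK <-; elim: (n - m) => [|d IH] //= xS.
by apply: fs_ext; apply: IH.
Qed.

Lemma phase (S : {set T}) m (P Q : pred T) :
  (forall x, P x -> x \in iter m (force_step e) S) ->
  (forall w, Q w -> P w \/ exists v, [/\ P v, e v w & forall u, e v u -> ~~ P u -> u = w]) ->
  forall x, Q x -> x \in iter m.+1 (force_step e) S.
Proof.
move=> HP HQ x /HQ [/HP|[v [Pv evx Hu]]] /=; first exact: fs_ext.
apply: (@fs_force _ v) => //; first exact: HP.
move=> u evu uS.
apply: Hu => //; apply/negP => /HP; by rewrite (negbTE uS).
Qed.

Lemma bigmin_le (I : eqType) (r : seq I) (P : pred I) (F : I -> nat) i0 x :
  x \in r -> P x -> \big[minn/i0]_(i <- r | P i) F i <= F x.
Proof.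
elim: r => [|y r IH] //=; rewrite in_cons big_cons.
case/orP => [/eqP-> -> | xr Px]; first exact: geq_minl.
case: (P y); last exact: IH.
by apply: leq_trans (geq_minr _ _) (IH xr Px).
Qed.

Lemma zfn_le (S : {set T}) : zero_forcing_set e S -> zero_forcing_number e <= #|S|.
Proof.
move=> zS; rewrite /zero_forcing_number.
by apply: bigmin_le => //; rewrite mem_index_enum.
Qed.

Lemma card_pred (p : pred T) : #|[set x | p x]| = \sum_(x : T) p x.
Proof.
rewrite -sum1_card big_mkcond /=; apply: eq_bigr => x _.
by rewrite inE; case: (p x).
Qed.

End Gen.

Lemma sum_int n a b : \sum_(i < n) ((a <= i) && (i < b)) = minn n b - a.
Proof.
elim: n => [|n IH]; first by rewrite big_ord0; lia.
rewrite big_ord_recr /= IH.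
case: (leqP a n) => Han; case: (ltnP n b) => Hnb /=; lia.
Qed.

Lemma modH n i j : i < n -> j < n -> (j + n - i) %% n = if i <= j then j - i else j + n - i.
Proof.
move=> hi hj; case: leqP => hij.
  have -> : j + n - i = (j - i) + n by lia.
  by rewrite modnDr modn_small //; lia.
by rewrite modn_small //; lia.
Qed.

Lemma adjHH k (i j : 'I_(3 * k - 1)) :
  adjG k (inl i) (inl j) =
  ((i <= j) && (k <= j - i <= 2 * k - 1)) || ((j < i) && (k <= i - j <= 2 * k - 1)).
Proof.
have := ltn_ord i; have := ltn_ord j; rewrite /adjG /= !modH //.
case: (leqP i j) => h1; case: (leqP j i) => h2 /=; lia.
Qed.

Lemma adjAA k (i j : 'I_k.+1) :
  adjG k (inr (inl i)) (inr (inl j)) = (nat_of_ord i != nat_of_ord j).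
Proof. rewrite /adjG /= [j == i]eq_sym orbb. by []. Qed.

Lemma XG_inE k (x : vert k) : (x \in XG k) =
  match x with inl _ => true | inr (inl _) => true | _ => false end.
Proof. by rewrite inE. Qed.

Lemma card_vert k : 1 <= k -> #|vert k| = 6 * k.
Proof. move=> hk; rewrite /vert !card_sum !card_ord; lia. Qed.

Lemma sum_int2 n a b c d :
  \sum_(i < n) (((a <= i) && (i < b)) || ((c <= i) && (i < d))) <= (b - a) + (d - c).
Proof.
apply: (@leq_trans (\sum_(i < n) (((a <= i) && (i < b)) + ((c <= i) && (i < d))))).
  by apply: leq_sum => i _; case: (_ && _); case: (_ && _).
rewrite big_split /= !sum_int; lia.
Qed.

Definition inS k (x : vert k) : bool := match x with
| inl j => ((1 <= j) && (j < k)) || ((2*k-1 <= j) && (j < 2*k))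
| inr (inl i) => (1 <= i) && (i < k.+1)
| inr (inr (inl i)) => (0 <= i) && (i < k)
| inr (inr (inr i)) => (0 <= i) && (i < k - 2)
end.

Lemma card_SG k : 2 <= k -> #|[set x | inS k x]| <= 4 * k - 2.
Proof.
move=> hk; rewrite card_pred !big_sumType.
have h1 := @sum_int2 (3*k-1) 1 k (2*k-1) (2*k).
have h2 := @sum_int k.+1 1 k.+1.
have h3 := @sum_int k.+1 0 k.
have h4 := @sum_int (k-1) 0 (k-2).
rewrite /inS.
rewrite /=.
apply: (leq_trans (leq_add h1 (leq_add (eq_leq h2) (leq_add (eq_leq h3) (eq_leq h4))))).
lia.
Qed.

Ltac solve_u := first [ exfalso; lia
  | (apply: (congr1 inl); apply: val_inj; simpl; lia)
  | (apply: (congr1 inr); apply: (congr1 inl); apply: val_inj; simpl; lia)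
  | (apply: (congr1 inr); apply: (congr1 inr); apply: (congr1 inl); apply: val_inj; simpl; lia)
  | (apply: (congr1 inr); apply: (congr1 inr); apply: (congr1 inr); apply: val_inj; simpl; lia) ].

Ltac nrmG := rewrite ?adjHH ?adjAA; unfold adjG; simpl.

Ltac nbG := let u := fresh "u" in move=> u; case: u => [u|[u|[u|u]]];
  move: (ltn_ord u); nrmG; move=> HHu HHa HHn; solve_u.

Section GG.
Variables (k : nat) (hk : 2 <= k).

Definition BG m := iter m (force_step (adjG k)) [set x | inS k x].

Definition P1 (x : vert k) : bool := match x with
| inl j => (j <= k - 1) || (nat_of_ord j == 2 * k - 1)
| inr (inl _) => true
| inr (inr (inl i)) => i < k
| inr (inr (inr i)) => i < k - 2
end.

Lemma G_ph0 x : inS k x -> x \in BG 0.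
Proof. by rewrite /BG /= inE. Qed.

Ltac forceG v := right; exists v; split; [ simpl; lia | nrmG; lia | nbG ].

Lemma G_ph1 x : P1 x -> x \in BG 1.
Proof.
apply: phase; first exact: G_ph0.
case=> [j|[j|[j|j]]]; have := ltn_ord j => /= hj Hw.
- case: (boolP (inS k (inl j))) => h; [by left|]; move: h => /= h.
  forceG (inr (inr (inl (@ord0 k))) : vert k).
- case: (boolP (inS k (inr (inl j)))) => h; [by left|]; move: h => /= h.
  forceG (inr (inl (@ord_max k)) : vert k).
- left; simpl; lia.
- left; simpl; lia.
Qed.

Definition Q t (x : vert k) : bool := match x with
| inl j => j <= 2 * k - 1 + t
| inr (inl _) => true
| inr (inr (inl _)) => true
| inr (inr (inr i)) => (i < k - 2) || (1 <= t)
end.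

Lemma G_ph2 x : Q 0 x -> x \in BG 2.
Proof.
apply: phase; first exact: G_ph1.
case=> [j|[j|[j|j]]]; have := ltn_ord j => /= hj Hw.
- case: (boolP (P1 (inl j))) => h; [by left|]; move: h => /= h.
  have hb : j - k + 1 < k.+1 by lia.
  forceG (inr (inr (inl (Ordinal hb))) : vert k).
- by left.
- case: (boolP (P1 (inr (inr (inl j))))) => h; [by left|]; move: h => /= h.
  forceG (inr (inl (@ord0 k)) : vert k).
- left; simpl; lia.
Qed.

Lemma G_ph3 t : t <= k - 1 -> forall x, Q t x -> x \in BG (2 + t).
Proof.
elim: t => [_|t IH ht]; first exact: G_ph2.
apply: phase; first by apply: IH; lia.
case=> [j|[j|[j|j]]]; have := ltn_ord j => /= hj Hw.
- case: (boolP (Q t (inl j))) => h; [by left|]; move: h => /= h.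
  have hb : t.+1 < 3 * k - 1 by lia.
  forceG (inl (Ordinal hb) : vert k).
- by left.
- by left.
- case: (boolP (Q t (inr (inr (inr j))))) => h; [by left|]; move: h => /= h.
  have hb : 0 < 3 * k - 1 by lia.
  forceG (inl (Ordinal hb) : vert k).
Qed.

Lemma G_all x : x \in force_closure (adjG k) [set x | inS k x].
Proof.
rewrite /force_closure card_vert; last by lia.
apply: (@iter_mono _ _ _ (2 + (k - 1))); first by lia.
apply: G_ph3 => //.
case: x => [j|[j|[j|j]]]; have := ltn_ord j => /= hj //; lia.
Qed.

End GG.

Definition inS' k (x : vert k) : bool := match x with
| inl j => ((1 <= j) && (j < k - 1)) || ((k <= j) && (j < 2 * k - 1))
| inr (inl i) => (0 <= i) && (i < k.+1)
| inr (inr (inl i)) => (0 <= i) && (i < 0)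
| inr (inr (inr i)) => (0 <= i) && (i < k - 1)
end.

Lemma card_SG' k : 2 <= k -> #|[set x | inS' k x]| <= 4 * k - 3.
Proof.
move=> hk; rewrite card_pred !big_sumType.
have h1 := @sum_int2 (3*k-1) 1 (k-1) k (2*k-1).
have h2 := @sum_int k.+1 0 k.+1.
have h3 := @sum_int k.+1 0 0.
have h4 := @sum_int (k-1) 0 (k-1).
rewrite /inS' /=.
apply: (leq_trans (leq_add h1 (leq_add (eq_leq h2) (leq_add (eq_leq h3) (eq_leq h4))))).
lia.
Qed.

Ltac nrmG' := rewrite /adjG' /gm_switch !XG_inE; simpl; rewrite ?adjHH ?adjAA; unfold adjG; simpl.

Ltac nbG' := let u := fresh "u" in move=> u; case: u => [u|[u|[u|u]]];
  move: (ltn_ord u); nrmG'; move=> HHu HHa HHn; solve_u.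

Ltac forceG' v := right; exists v; split; [ simpl; lia | nrmG'; lia | nbG' ].

Section GG'.
Variables (k : nat) (hk : 2 <= k).

Definition BG' m := iter m (force_step (adjG' k)) [set x | inS' k x].

Definition R1 (x : vert k) : bool := match x with
| inl j => (1 <= j) && (j <= 2 * k - 2)
| _ => true
end.

Lemma G'_ph0 x : inS' k x -> x \in BG' 0.
Proof. by rewrite /BG' /= inE. Qed.

Lemma G'_ph1 x : R1 x -> x \in BG' 1.
Proof.
apply: phase; first exact: G'_ph0.
case=> [j|[j|[j|j]]]; have := ltn_ord j => /= hj Hw.
- case: (boolP (inS' k (inl j))) => h; [by left|]; move: h => /= h.
  have hb : 0 < k - 1 by lia.
  forceG' (inr (inr (inr (Ordinal hb))) : vert k).
- left; simpl; lia.
- forceG' (inr (inl j) : vert k).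
- left; simpl; lia.
Qed.

Definition Q' t (x : vert k) : bool := match x with
| inl j => j <= 2 * k - 2 + t
| _ => true
end.

Lemma G'_ph2 x : Q' 0 x -> x \in BG' 2.
Proof.
apply: phase; first exact: G'_ph1.
case=> [j|[j|[j|j]]]; have := ltn_ord j => /= hj Hw; try by left.
case: (boolP (R1 (inl j))) => h; [by left|]; move: h => /= h.
forceG' (inr (inr (inl (@ord_max k))) : vert k).
Qed.

Lemma G'_ph3 t : t <= k -> forall x, Q' t x -> x \in BG' (2 + t).
Proof.
elim: t => [_|t IH ht]; first exact: G'_ph2.
apply: phase; first by apply: IH; lia.
case=> [j|[j|[j|j]]]; have := ltn_ord j => /= hj Hw; try by left.
case: (boolP (Q' t (inl j))) => h; [by left|]; move: h => /= h.
have hb : t < 3 * k - 1 by lia.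
forceG' (inl (Ordinal hb) : vert k).
Qed.

Lemma G'_all x : x \in force_closure (adjG' k) [set x | inS' k x].
Proof.
rewrite /force_closure card_vert; last by lia.
apply: (@iter_mono _ _ _ (2 + k)); first by lia.
apply: G'_ph3 => //.
case: x => [j|[j|[j|j]]]; have := ltn_ord j => /= hj //; lia.
Qed.

End GG'.

Theorem lemma5p7 (k : nat) (hk : 2 <= k) :
  zero_forcing_number (adjG k) <= 4 * k - 2 /\
  zero_forcing_number (adjG' k) <= 4 * k - 3.
Proof.
split.
- apply: (leq_trans _ (card_SG k hk)); apply: zfn_le.
  by apply/eqP/setP => x; rewrite inE (G_all k hk).
- apply: (leq_trans _ (card_SG' k hk)); apply: zfn_le.
  by apply/eqP/setP => x; rewrite inE G'_all.
Qed.
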